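(* Let $\sigma$ be a term ordering on $\mathbb{T}^n$, let $I$ be a non-zero ideal in $\mathbb{Q}[x_1,\dots,x_n]$, and let $G_\sigma$ be its reduced $\sigma$-Gröbner basis. Let $J=\langle\operatorname{prim}(G_\sigma)\rangle\subseteq\mathbb{Z}[x_1,\dots,x_n]$. Then $\operatorname{rad}(\operatorname{den}(G_\sigma))=\operatorname{rad}(\operatorname{lcm}_\sigma(J))$.
   Context: $\mathbb{T}^n$ is the monoid of power-products in $x_1,\dots,x_n$; $\mathrm{LT}_\sigma$, $\mathrm{LC}_\sigma$, $\mathrm{LM}_\sigma$ denote leading term, leading coefficient and leading monomial. For $f\in\mathbb{Q}[x_1,\dots,x_n]$, $\operatorname{den}(f)$ is the positive lcm of the denominators of its coefficients; $\operatorname{den}(F)$ is the lcm of $\operatorname{den}(f)$, $f\in F$. For non-zero $f$, with $c$ the integer content of $f\cdot\operatorname{den}(f)$, $\operatorname{prim}(f)=c^{-1}f\cdot\operatorname{den}(f)$, and $\operatorname{prim}(F)=\{\operatorname{prim}(f):f\in F\}$. For a positive integer $N$, $\operatorname{rad}(N)$ is the product of the distinct primes dividing $N$. Non-zero $g_1,\dots,g_s\in\mathbb{Z}[x_1,\dots,x_n]$ form a strong $\sigma$-Gröbner basis of $\langle g_1,\dots,g_s\rangle$ if for every non-zero $f$ in this ideal some $\mathrm{LM}_\sigma(g_i)$ divides $\mathrm{LM}_\sigma(f)$; it is minimal if moreover $\mathrm{LM}_\sigma(g_i)\nmid\mathrm{LM}_\sigma(g_j)$ for $i\ne j$. Every non-zero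 ideal of $\mathbb{Z}[x_1,\dots,x_n]$ has a minimal strong $\sigma$-Gröbner basis, and all of them have the same set of leading coefficients. For an ideal $J$ of $\mathbb{Z}[x_1,\dots,x_n]$, $\operatorname{lcm}_\sigma(J)$ is the least common multiple of the leading coefficients of the elements of a minimal strong $\sigma$-Gröbner basis of $J$. *)

(* Defs.v *)
From HB Require Import structures.
From mathcomp Require Import all_boot all_order all_algebra.
From mathcomp Require Import mpoly.
From Stdlib Require Import ClassicalEpsilon.

Set Implicit Arguments.
Unset Strict Implicit.
Unset Printing Implicit Defensive.

Import Order.TTheory GRing.Theory Num.Theory.
Local Open Scope ring_scope.

Record term_order (n : nat) := TermOrder {
  tle : rel 'X_{1..n};
  tle_refl : forall m, tle m m;
  tle_anti : forall m1 m2, tle m1 m2 -> tle m2 m1 -> m1 = m2;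
  tle_trans : forall m1 m2 m3, tle m1 m2 -> tle m2 m3 -> tle m1 m3;
  tle_total : forall m1 m2, tle m1 m2 || tle m2 m1;
  tle_mul : forall m1 m2 m, tle m1 m2 -> tle (m1 + m)%MM (m2 + m)%MM;
  tle_one : forall m, tle 0%MM m
}.

Section Leading.
Variables (n : nat) (R : nzRingType) (sigma : term_order n).

Definition LT (f : {mpoly R[n]}) : 'X_{1..n} :=
  foldr (fun m acc => if tle sigma acc m then m else acc) 0%MM (msupp f).

Definition LC (f : {mpoly R[n]}) : R := f@_(LT f).
End Leading.

Definition in_ideal (n : nat) (R : comNzRingType) (G : seq {mpoly R[n]})
    (f : {mpoly R[n]}) : Prop :=
  exists c : seq {mpoly R[n]},
    f = \sum_(i < size G) c`_i * G`_i.

Definition is_ideal (n : nat) (R : comNzRingType) (I : {mpoly R[n]} -> Prop) :=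
  [/\ I 0,
      forall f g, I f -> I g -> I (f + g)
    & forall a f, I f -> I (a * f)].

Definition reduced_groebner (n : nat) (sigma : term_order n)
    (I : {mpoly rat[n]} -> Prop) (G : seq {mpoly rat[n]}) : Prop :=
  [/\ uniq G /\ (forall g, g \in G -> g != 0),
      forall f, I f <-> in_ideal G f,
      forall f, I f -> f != 0 -> (exists g, g \in G /\ (LT sigma g <= LT sigma f)%MM),
      forall g, g \in G -> LC sigma g = 1
    & forall g h, g \in G -> h \in G -> g != h ->
        forall m, m \in msupp h -> ~~ (LT sigma g <= m)%MM].

Definition den (n : nat) (f : {mpoly rat[n]}) : nat :=
  \big[lcmn/1%N]_(m <- msupp f) `|denq f@_m|%N.

Definition denF (n : nat) (F : seq {mpoly rat[n]}) : nat :=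
  \big[lcmn/1%N]_(f <- F) den f.

Definition icontent (n : nat) (f : {mpoly rat[n]}) : nat :=
  \big[gcdn/0%N]_(m <- msupp f) `|numq (f@_m * (den f)%:~R)|%N.

(* prim(f) = c^-1 * den(f) * f, as a polynomial with integer coefficients *)
Definition prim (n : nat) (f : {mpoly rat[n]}) : {mpoly int[n]} :=
  \sum_(m <- msupp f)
     (numq (f@_m * (den f)%:~R / (icontent f)%:~R)) *: 'X_[m].

Definition radn (N : nat) : nat := \prod_(p <- primes N) p.

Definition lm_dvd (n : nat) (sigma : term_order n) (g f : {mpoly int[n]}) : bool :=
  (LC sigma g %| LC sigma f)%Z && (LT sigma g <= LT sigma f)%MM.

Definition strong_groebner (n : nat) (sigma : term_order n)
    (J : {mpoly int[n]} -> Prop) (H : seq {mpoly int[n]}) : Prop :=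
  [/\ forall h, h \in H -> h != 0,
      forall f, J f <-> in_ideal H f
    & forall f, J f -> f != 0 -> (exists h, h \in H /\ lm_dvd sigma h f)].

Definition minimal_strong_groebner (n : nat) (sigma : term_order n)
    (J : {mpoly int[n]} -> Prop) (H : seq {mpoly int[n]}) : Prop :=
  strong_groebner sigma J H /\
  forall i j, (i < size H)%N -> (j < size H)%N -> i != j ->
    ~~ lm_dvd sigma H`_i H`_j.

(* lcm_sigma(J): lcm of the leading coefficients of a (chosen) minimal strong
   sigma-Groebner basis of J; well defined since all such bases share the same
   set of leading coefficients. *)
Definition lcm_sigma (n : nat) (sigma : term_order n)
    (J : {mpoly int[n]} -> Prop) : nat :=
  let H := epsilon (inhabits [::]) (minimal_strong_groebner sigma J) in
  \big[lcmn/1%N]_(h <- H) `|LC sigma h|%N.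

(* Main.v *)
Require Import Defs.
From HB Require Import structures.
From mathcomp Require Import all_boot all_order all_algebra.
From mathcomp Require Import mpoly.
From Stdlib Require Import ClassicalEpsilon Classical.
Import GRing.Theory Num.Theory.
Local Open Scope ring_scope.
Set Implicit Arguments.
Unset Strict Implicit.
Unset Printing Implicit Defensive.

Section Order.
Variables (n : nat) (s : term_order n).
Local Notation tl := (tle s).

Definition mx (l : seq 'X_{1..n}) : 'X_{1..n} :=
  foldr (fun m acc => if tl acc m then m else acc) 0%MM l.

Lemma mx_ub l x : x \in l -> tl x (mx l).
Proof.
elim: l => [//|a l IH]; rewrite inE /= => /orP [/eqP ->|xl].
  case: ifP => h; first exact: tle_refl.
  by case/orP: (tle_total s a (mx l)) => //; rewrite h.
have := IH xl; case: ifP => // h1 h2; exact: tle_trans h2 h1.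
Qed.

Lemma mx_mem l : l != [::] -> mx l \in l.
Proof.
elim: l => [//|a l IH] _ /=; case: ifP => h; first by rewrite inE eqxx.
case: l IH h => [|b l] IH h; first by rewrite /= tle_one in h.
by rewrite inE IH ?orbT.
Qed.

Lemma tle_lem m1 m2 : (m1 <= m2)%MM -> tl m1 m2.
Proof.
move=> h; rewrite -(submK h); have := tle_mul m1 (tle_one s (m2 - m1)%MM).
by rewrite add0m.
Qed.

Lemma tle_add2r m1 m2 m : tl (m1 + m)%MM (m2 + m)%MM = tl m1 m2.
Proof.
apply/idP/idP; last exact: tle_mul.
move=> h; case/orP: (tle_total s m1 m2) => // h2.
have := tle_mul m h2 => h3; have e := tle_anti h h3.
by move/addIm: e => ->; apply: tle_refl.
Qed.

Definition tlt m1 m2 := tl m1 m2 && (m1 != m2).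

Lemma tlt_trans_le m1 m2 m3 : tlt m1 m2 -> tl m2 m3 -> tlt m1 m3.
Proof.
case/andP=> h1 ne h2; rewrite /tlt (tle_trans h1 h2) /=.
apply/negP => /eqP e; rewrite -e in h2; by rewrite (tle_anti h1 h2) eqxx in ne.
Qed.

Lemma tle_lt_trans m1 m2 m3 : tl m1 m2 -> tlt m2 m3 -> tlt m1 m3.
Proof.
move=> h1 /andP [h2 ne]; rewrite /tlt (tle_trans h1 h2) /=.
apply/negP => /eqP e; rewrite e in h1; by rewrite (tle_anti h2 h1) eqxx in ne.
Qed.

Lemma tlt_nle m1 m2 : tlt m1 m2 -> ~~ tl m2 m1.
Proof.
case/andP=> h ne; apply/negP=> h2; by rewrite (tle_anti h h2) eqxx in ne.
Qed.

Lemma tle_tlt_total m1 m2 : tl m1 m2 || tlt m2 m1.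
Proof.
rewrite /tlt; case: (eqVneq m1 m2) => [->|ne]; first by rewrite tle_refl.
by case/orP: (tle_total s m1 m2) => ->; rewrite ?orbT // eq_sym ne.
Qed.

End Order.


Section LTTheory.
Variables (n : nat) (R : comNzRingType) (s : term_order n).
Local Notation tl := (tle s).
Implicit Types (f g : {mpoly R[n]}).

Definition bnd f mu := forall m, f@_m != 0 -> tl m mu.

Lemma msupp_0 : msupp (0 : {mpoly R[n]}) = [::].
Proof. by apply/eqP; rewrite msupp_eq0. Qed.

Lemma LT0 : LT s (0 : {mpoly R[n]}) = 0%MM.
Proof. by rewrite /LT msupp_0. Qed.

Lemma LC0 : LC s (0 : {mpoly R[n]}) = 0.
Proof. by rewrite /LC mcoeff0. Qed.

Lemma LT_ub f : bnd f (LT s f).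
Proof. by move=> m; rewrite -mcoeff_msupp => h; apply: mx_ub. Qed.

Lemma LC_neq0 f : f != 0 -> LC s f != 0.
Proof.
by move=> nz; rewrite /LC -mcoeff_msupp; apply: mx_mem; rewrite msupp_eq0.
Qed.

Lemma LC_eq0 f : (LC s f == 0) = (f == 0).
Proof.
apply/idP/idP; last by move/eqP ->; rewrite LC0.
by apply: contraLR; move=> h; apply: LC_neq0.
Qed.

Lemma LT_eq f mu : f@_mu != 0 -> bnd f mu -> LT s f = mu.
Proof.
move=> h b; apply: tle_anti; first apply: b.
  by apply: LC_neq0; apply: contraNneq h => ->; rewrite mcoeff0.
exact: LT_ub.
Qed.

Lemma LT_le f mu : bnd f mu -> tl (LT s f) mu.
Proof.
move=> b; case: (eqVneq f 0) => [->|nz]; first by rewrite LT0 tle_one.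
by apply: b; apply: LC_neq0.
Qed.

Lemma LT_lt f mu : bnd f mu -> f@_mu = 0 -> f != 0 -> tlt s (LT s f) mu.
Proof.
move=> b e nz; rewrite /tlt LT_le //=; apply/eqP=> e2.
by move: (LC_neq0 nz); rewrite /LC e2 e eqxx.
Qed.

Lemma bndD f g mu : bnd f mu -> bnd g mu -> bnd (f + g) mu.
Proof.
move=> bf bg m; rewrite mcoeffD; case: (eqVneq f@_m 0) => [->|h]; last by move=> _; apply: bf.
by rewrite add0r; apply: bg.
Qed.

Lemma bndZ f mu c : bnd f mu -> bnd (c *: f) mu.
Proof.
move=> bf m; rewrite mcoeffZ => h; apply: bf; apply: contraNneq h => ->.
by rewrite mulr0.
Qed.

Lemma bndN f mu : bnd f mu -> bnd (- f) mu.
Proof. by move=> bf m; rewrite mcoeffN oppr_eq0; apply: bf. Qed.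

Lemma bnd_le f mu mu' : bnd f mu -> tl mu mu' -> bnd f mu'.
Proof. by move=> b h m /b h2; apply: tle_trans h2 h. Qed.

Lemma mcoeffMX_neq0 f t m : (f * 'X_[t])@_m != 0 ->
  exists2 k, m = (t + k)%MM & f@_k != 0.
Proof.
rewrite -mcoeff_msupp (perm_mem (msuppMX f t)) => /mapP [k kin ->].
by exists k; rewrite // -mcoeff_msupp.
Qed.

Lemma bndMX f mu t : bnd f mu -> bnd (f * 'X_[t]) (t + mu)%MM.
Proof.
move=> b m /mcoeffMX_neq0 [k -> /b h].
by rewrite ![(t + _)%MM]addmC tle_add2r.
Qed.

Lemma LTMX f t : f != 0 -> LT s (f * 'X_[t]) = (t + LT s f)%MM.
Proof.
move=> nz; apply: LT_eq; last exact/bndMX/LT_ub.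
by rewrite mcoeffMX; apply: LC_neq0.
Qed.

Lemma LCMX f t : LC s (f * 'X_[t]) = LC s f.
Proof.
case: (eqVneq f 0) => [->|nz]; first by rewrite mul0r.
by rewrite /LC LTMX // mcoeffMX.
Qed.

Lemma MX_neq0 f t : f != 0 -> f * 'X_[t] != 0.
Proof.
move=> nz; rewrite -LC_eq0 LCMX; exact: LC_neq0.
Qed.

Lemma comb_bnd f1 f2 u v : LT s f1 = LT s f2 ->
  bnd (u *: f1 + v *: f2) (LT s f1) /\
  (u *: f1 + v *: f2)@_(LT s f1) = u * LC s f1 + v * LC s f2.
Proof.
move=> e; split; first by apply: bndD; apply: bndZ; [exact: LT_ub | rewrite e; exact: LT_ub].
by rewrite mcoeffD !mcoeffZ /LC e.
Qed.

Lemma comb_LT f1 f2 u v : LT s f1 = LT s f2 ->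
  u * LC s f1 + v * LC s f2 != 0 ->
  LT s (u *: f1 + v *: f2) = LT s f1 /\ LC s (u *: f1 + v *: f2) = u * LC s f1 + v * LC s f2.
Proof.
move=> e nz; case: (comb_bnd u v e) => b c.
have lt : LT s (u *: f1 + v *: f2) = LT s f1 by apply: LT_eq; rewrite // c.
by split; rewrite // /LC lt c.
Qed.

End LTTheory.


Local Close Scope ring_scope.

Lemma nat_min (P : nat -> Prop) : (exists k, P k) -> exists k, P k /\ forall j, P j -> k <= j.
Proof.
case=> k0 Pk0; elim: k0 {-2}k0 (leqnn k0) Pk0 => [|N IH] k0 lek0 Pk0.
  exists k0; split => // j _; move: lek0; rewrite leqn0 => /eqP ->; done.
case: (classic (exists j, j < k0 /\ P j)) => [[j [ltj Pj]]|nex].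
  by apply: (IH j) => //; rewrite -ltnS (leq_trans ltj lek0).
exists k0; split => // j Pj; rewrite leqNgt; apply/negP => ltj; apply: nex; by exists j.
Qed.

Lemma mono_sub (g : nat -> nat) : exists psi : nat -> nat,
  (forall k, psi k < psi k.+1) /\ (forall k, g (psi k) <= g (psi k.+1)).
Proof.
have H : forall j, exists i, j < i /\ forall i', j < i' -> g i <= g i'.
  move=> j; have [v [[i [ji gi]] vmin]] :=
    @nat_min (fun v => exists i, j < i /\ g i = v) (ex_intro _ (g j.+1) (ex_intro _ j.+1 (conj (ltnSn j) erefl))).
  exists i; split => // i' ji'; rewrite gi; apply: vmin; by exists i'.
pose nxt j := proj1_sig (constructive_indefinite_description _ (H j)).
have nxtP j : j < nxt j /\ forall i', j < i' -> g (nxt j) <= g i'.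
  by rewrite /nxt; case: constructive_indefinite_description.
exists (fun k => iter k.+1 nxt 0); split => k.
  by rewrite [X in _ < X]iterS; case: (nxtP (iter k.+1 nxt 0)).
rewrite iterS; case: (nxtP (iter k nxt 0)) => lt1 H1; apply: H1.
rewrite [X in _ < X]iterS; apply: (ltn_trans lt1); by case: (nxtP (nxt (iter k nxt 0))).
Qed.

Section Dickson.
Variable n : nat.

Lemma dickson_k (f : nat -> 'X_{1..n}) k : exists phi : nat -> nat,
  (forall l, phi l < phi l.+1) /\
  forall i : 'I_n, i < k -> forall l, f (phi l) i <= f (phi l.+1) i.
Proof.
elim: k => [|k [phi [phiI phiM]]]; first by exists id; split.
case: (ltnP k n) => kn; last first.
  exists phi; split => // i ik; apply: phiM; rewrite ltnS leq_eqVlt in ik.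
  case/orP: ik => // /eqP e; move: (ltn_ord i); rewrite e ltnNge kn //.
pose i0 := Ordinal kn.
have [psi [psiI psiM]] := mono_sub (fun l => f (phi l) i0).
have phimono := homo_ltn ltn_trans phiI.
exists (fun l => phi (psi l)); split => [l|i ik l]; first exact: phimono.
rewrite ltnS leq_eqVlt in ik; case/orP: ik => [/eqP e|ik].
  have -> : i = i0 by apply: val_inj.
  exact: psiM.
apply: (homo_leq (r := fun a b => f a i <= f b i)) => //.
- by move=> y x z; apply: leq_trans.
- by apply: (phiM i ik).
- by apply: ltnW; apply: psiI.
Qed.

Lemma dickson (f : nat -> 'X_{1..n}) : exists phi : nat -> nat,
  (forall l, phi l < phi l.+1) /\ forall l, (f (phi l) <= f (phi l.+1))%MM.
Proof.
have [phi [phiI phiM]] := dickson_k f n.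
exists phi; split => // l; apply/mnm_lepP => i; exact: phiM.
Qed.

Variable s : term_order n.

Lemma tlt_trans : forall y x z, tlt s x y -> tlt s y z -> tlt s x z.
Proof. by move=> y x z h1 /andP [h2 _]; apply: tlt_trans_le h1 h2. Qed.

Lemma tlt_wf : well_founded (tlt s).
Proof.
move=> x0; apply: NNPP => nacc.
pose T := {y | ~ Acc (tlt s) y}.
have ex : forall y : T, exists z : T, tlt s (proj1_sig z) (proj1_sig y).
  case=> y ny /=; apply: NNPP => nz; apply: ny; constructor => z zy.
  apply: NNPP => nzacc; apply: nz; by exists (exist _ z nzacc).
pose step (y : T) : T := proj1_sig (constructive_indefinite_description _ (ex y)).
have stepP y : tlt s (proj1_sig (step y)) (proj1_sig y).
  by rewrite /step; case: constructive_indefinite_description.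
pose f k := proj1_sig (iter k step (exist _ x0 nacc)).
have fD : forall i j, i < j -> tlt s (f j) (f i).
  apply: (homo_ltn (r := fun a b => tlt s b a)).
    by move=> y x z h1 h2; apply: tlt_trans h2 h1.
  by move=> i; rewrite /f iterS; apply: stepP.
have [phi [phiI phiM]] := dickson f.
have := fD _ _ (phiI 0); move/tlt_nle; rewrite tle_lem //.
Qed.

End Dickson.


Local Open Scope ring_scope.

Section Ideals.
Variables (n : nat) (R : comNzRingType).
Implicit Types (G : seq {mpoly R[n]}) (f g : {mpoly R[n]}).

Lemma in_ideal0 G : in_ideal G 0.
Proof. by exists [::]; rewrite big1 // => i _; rewrite nth_nil mul0r. Qed.

Lemma in_idealD G f g : in_ideal G f -> in_ideal G g -> in_ideal G (f + g).
Proof.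
case=> c1 -> [c2 ->]; exists (mkseq (fun i => c1`_i + c2`_i) (size G)).
rewrite -big_split /=; apply: eq_bigr => i _; by rewrite nth_mkseq // mulrDl.
Qed.

Lemma in_idealM G a f : in_ideal G f -> in_ideal G (a * f).
Proof.
case=> c1 ->; exists (mkseq (fun i => a * c1`_i) (size G)).
rewrite mulr_sumr; apply: eq_bigr => i _; by rewrite nth_mkseq // mulrA.
Qed.

Lemma in_ideal_gen G g : g \in G -> in_ideal G g.
Proof.
move=> gG; exists (mkseq (fun i => (i == index g G)%:R) (size G)).
have ig : (index g G < size G)%N by rewrite index_mem.
rewrite (bigD1 (Ordinal ig)) //= nth_mkseq // eqxx mul1r nth_index // big1 ?addr0 //.
move=> i ne; rewrite nth_mkseq //; case: eqP => [e|_]; last by rewrite mul0r.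
by move: ne; rewrite -val_eqE /= e eqxx.
Qed.

Lemma is_ideal_in_ideal G : is_ideal (in_ideal G).
Proof. split; [exact: in_ideal0 | exact: in_idealD | exact: in_idealM]. Qed.

Lemma ideal_sub (J : {mpoly R[n]} -> Prop) G f : is_ideal J ->
  (forall g, g \in G -> J g) -> in_ideal G f -> J f.
Proof.
case=> J0 JD JM HG [c ->]; apply: (big_ind (fun x => J x)) => // i _.
by apply: JM; apply: HG; apply: mem_nth.
Qed.

Lemma ideal_N (J : {mpoly R[n]} -> Prop) f : is_ideal J -> J f -> J (- f).
Proof. by case=> _ _ JM Jf; rewrite -mulN1r; apply: JM. Qed.

Lemma ideal_B (J : {mpoly R[n]} -> Prop) f g : is_ideal J -> J f -> J g -> J (f - g).
Proof. by move=> iJ Jf Jg; case: iJ (iJ) => _ JD _ iJ; apply: JD => //; apply: ideal_N. Qed.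

Lemma ideal_Z (J : {mpoly R[n]} -> Prop) c f : is_ideal J -> J f -> J (c *: f).
Proof. by case=> _ _ JM Jf; rewrite -mul_mpolyC; apply: JM. Qed.

Lemma ideal_MX (J : {mpoly R[n]} -> Prop) f t : is_ideal J -> J f -> J (f * 'X_[t]).
Proof. by case=> _ _ JM Jf; rewrite mulrC; apply: JM. Qed.

End Ideals.


Definition pb (P : Prop) : bool := if excluded_middle_informative P then true else false.
Lemma pbP (P : Prop) : pb P <-> P.
Proof. by rewrite /pb; case: excluded_middle_informative. Qed.

Lemma mdeg_lt n (m1 m2 : 'X_{1..n}) : (m1 <= m2)%MM -> m1 != m2 -> (mdeg m1 < mdeg m2)%N.
Proof.
move=> le ne; rewrite -(submK le) mdegD -[X in (X < _)%N]add0n ltn_add2r lt0n mdeg_eq0.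
apply: contra ne => /eqP e; by rewrite -(submK le) e add0m.
Qed.

Section Comb.
Variables (n : nat) (s : term_order n) (J : {mpoly int[n]} -> Prop).
Hypothesis iJ : is_ideal J.

Lemma comb_J f1 f2 (u v : int) : J f1 -> J f2 -> LT s f1 = LT s f2 ->
  u * LC s f1 + v * LC s f2 != 0 ->
  [/\ J (u *: f1 + v *: f2), u *: f1 + v *: f2 != 0,
      LT s (u *: f1 + v *: f2) = LT s f1 &
      LC s (u *: f1 + v *: f2) = u * LC s f1 + v * LC s f2].
Proof.
move=> J1 J2 e nz; have [lt lc] := comb_LT e nz.
split => //.
- by case: iJ => _ JD _; apply: JD; apply: ideal_Z.
- by rewrite -(LC_eq0 s) lc.
Qed.

Lemma gcd_comb f1 f2 : J f1 -> J f2 -> f1 != 0 -> LT s f1 = LT s f2 ->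
  exists f, [/\ J f, f != 0, LT s f = LT s f1 & LC s f = gcdz (LC s f1) (LC s f2)].
Proof.
move=> J1 J2 nz e; case: (Bezoutz (LC s f1) (LC s f2)) => u [v huv].
have nzg : u * LC s f1 + v * LC s f2 != 0.
  by rewrite huv gcdz_eq0 negb_and (LC_neq0 s nz).
have [? ? ? ?] := comb_J J1 J2 e nzg; exists (u *: f1 + v *: f2); split => //.
by rewrite -huv.
Qed.

End Comb.

Section Exist.
Variables (n : nat) (s : term_order n) (J : {mpoly int[n]} -> Prop).
Hypothesis iJ : is_ideal J.
Local Notation tl := (tle s).

Definition Cn m k := exists f, [/\ J f, f != 0, LT s f = m & absz (LC s f) = k].

Definition dm m : nat := epsilon (inhabits 0%N) (fun k =>
  (k = 0%N /\ ~ exists k', Cn m k') \/ (Cn m k /\ forall k', Cn m k' -> (k <= k')%N)).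

Lemma dm_spec m : (dm m = 0%N /\ ~ exists k, Cn m k) \/
  (Cn m (dm m) /\ forall k', Cn m k' -> (dm m <= k')%N).
Proof.
apply: (epsilon_spec (inhabits 0%N) (fun k =>
  (k = 0%N /\ ~ exists k', Cn m k') \/ (Cn m k /\ forall k', Cn m k' -> (k <= k')%N))).
case: (classic (exists k, Cn m k)) => [ex|nex]; last by exists 0%N; left.
have [k [Ck km]] := nat_min ex; exists k; by right.
Qed.

Lemma Cn_pos m k : Cn m k -> (0 < k)%N.
Proof. by case=> f [_ nz _ <-]; rewrite absz_gt0 LC_neq0. Qed.

Lemma dm_Cn m k : Cn m k -> Cn m (dm m) /\ (forall k', Cn m k' -> (dm m <= k')%N).
Proof.
move=> Ck; case: (dm_spec m) => [[_ nex]|//]; exfalso; apply: nex; by exists k.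
Qed.

Lemma dm_pos m k : Cn m k -> (0 < dm m)%N.
Proof. by move/dm_Cn => [/Cn_pos]. Qed.

Lemma dm_pos_Cn m : (0 < dm m)%N -> Cn m (dm m).
Proof.
case: (dm_spec m) => [[-> _]|[]] //.
Qed.

Lemma dm_dvd m k : Cn m k -> (dm m %| k)%N.
Proof.
move=> Ck; have [[f0 [J0 nz0 e0 a0]] dmin] := dm_Cn Ck.
case: Ck => f [J1 nz1 e1 a1].
have [g [Jg nzg eg lcg]] := gcd_comb iJ J0 J1 nz0 (etrans e0 (esym e1)).
have Cg : Cn m (gcdn (dm m) k) by exists g; split => //; rewrite ?eg // lcg /gcdz a0 a1.
have := dmin _ Cg => le; have dg : (gcdn (dm m) k %| dm m)%N by apply: dvdn_gcdl.
have eq : gcdn (dm m) k = dm m.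
  apply/eqP; rewrite eqn_leq le andbT dvdn_leq //; exact: dm_pos (Cg).
by rewrite -eq dvdn_gcdr.
Qed.

Lemma Cn_mono m m' k : (m' <= m)%MM -> Cn m' k -> Cn m k.
Proof.
move=> le [f [Jf nz e a]]; exists (f * 'X_[m - m']); split.
- exact: ideal_MX.
- exact: MX_neq0.
- by rewrite LTMX // e submK.
- by rewrite LCMX.
Qed.

Lemma dm_mono m m' : (m' <= m)%MM -> (0 < dm m')%N -> (0 < dm m)%N /\ (dm m %| dm m')%N.
Proof.
move=> le /dm_pos_Cn C; have C2 := Cn_mono le C; split; [exact: dm_pos C2 | exact: dm_dvd].
Qed.

Definition jump m := (0 < dm m)%N /\ forall m', (m' <= m)%MM -> m' != m -> dm m' != dm m.

Lemma below_jump m : (0 < dm m)%N -> exists m0, [/\ (m0 <= m)%MM, dm m0 = dm m & jump m0].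
Proof.
move: {2}(mdeg m) (leqnn (mdeg m)) => N; elim: N m => [|N IH] m lem pos.
  exists m; split => //; first exact: lepm_refl.
  split => // m' le' ne'; have := mdeg_lt le' ne'; by rewrite ltnNge (leq_trans lem (leq0n _)).
case: (classic (jump m)) => [j|nj]; first by exists m; split => //; apply: lepm_refl.
have : exists m', [/\ (m' <= m)%MM, m' != m & dm m' = dm m].
  apply: NNPP => nex; apply: nj; split => // m' le' ne'; apply/eqP => e; apply: nex; by exists m'.
case=> m' [le' ne' e']; have lt' := mdeg_lt le' ne'.
have le2 : (mdeg m' <= N)%N by rewrite -ltnS; exact: leq_trans lt' lem.
have [m0 [le0 e0 j0]] : exists m0, [/\ (m0 <= m')%MM, dm m0 = dm m' & jump m0].
  by apply: IH => //; rewrite e'.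
exists m0; split => //; [exact: lepm_trans le0 le' | by rewrite e0 e'].
Qed.

End Exist.


Section Exist2.
Variables (n : nat) (s : term_order n) (J : {mpoly int[n]} -> Prop).
Hypothesis iJ : is_ideal J.
Local Notation tl := (tle s).
Local Notation dm := (dm s J).
Local Notation jump := (jump s J).

Lemma jumps_fin : exists l : seq 'X_{1..n}, forall m, jump m -> m \in l.
Proof.
apply: NNPP => nex.
have H : forall l : seq 'X_{1..n}, exists m, jump m /\ m \notin l.
  move=> l; apply: NNPP => nm; apply: nex; exists l => m jm; apply: NNPP => nin.
  by apply: nm; exists m; split => //; apply/negP.
pose pick l := proj1_sig (constructive_indefinite_description _ (H l)).
have pickP l : jump (pick l) /\ pick l \notin l.
  by rewrite /pick; case: constructive_indefinite_description.
pose L k := iter k (fun l => pick l :: l) [::].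
pose x k := pick (L k).
have Lsub : forall i j, (i < j)%N -> x i \in L j.
  have aux : forall i d, x i \in L (i.+1 + d)%N.
    move=> i; elim=> [|d IHd]; first by rewrite addn0 /L iterS inE eqxx.
    by rewrite addnS /L iterS inE -/(L _) IHd orbT.
  by move=> i j lt; rewrite -(subnKC lt); apply: aux.
have xinj : forall i j, (i < j)%N -> x i != x j.
  move=> i j lt; apply: contraTneq (Lsub _ _ lt) => ->.
  by case: (pickP (L j)).
have [phi [phiI phiM]] := dickson x.
pose a l := dm (x (phi l)).
have dec : forall l, (a l.+1 < a l)%N.
  move=> l; case: (pickP (L (phi l.+1))) => [[pos1 jp] _].
  case: (pickP (L (phi l))) => [[pos0 _] _].
  have ne := jp _ (phiM l) (xinj _ _ (phiI l)).
  have [_ dv] := dm_mono iJ (phiM l) pos0.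
  rewrite /a ltn_neqAle eq_sym ne /=; exact: dvdn_leq.
have bound : forall l, (a l + l <= a 0)%N.
  elim=> [|l IHl]; first by rewrite addn0.
  by rewrite addnS; apply: leq_trans IHl; rewrite ltn_add2r.
by have := bound (a 0%N).+1; rewrite addnS ltnNge leq_addl.
Qed.

Lemma jumps_seq : exists l : seq 'X_{1..n}, uniq l /\ forall m, m \in l <-> jump m.
Proof.
have [l0 hl0] := jumps_fin; exists [seq m <- undup l0 | pb (jump m)]; split.
  by rewrite filter_uniq ?undup_uniq.
move=> m; rewrite mem_filter mem_undup; split.
  by case/andP => /pbP.
by move=> jm; rewrite hl0 // andbT; apply/pbP.
Qed.

Definition fsel m : {mpoly int[n]} := epsilon (inhabits 0)
  (fun f => [/\ J f, f != 0, LT s f = m & absz (LC s f) = dm m]).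

Lemma fsel_spec m : (0 < dm m)%N ->
  [/\ J (fsel m), fsel m != 0, LT s (fsel m) = m & absz (LC s (fsel m)) = dm m].
Proof.
move/(dm_pos_Cn (s := s) (J := J)) => C.
exact: (epsilon_spec (inhabits 0)
  (fun f => [/\ J f, f != 0, LT s f = m & absz (LC s f) = dm m]) C).
Qed.

Theorem exists_msgb : exists H, minimal_strong_groebner s J H.
Proof.
have [l [ul hl]] := jumps_seq.
pose H := map fsel l.
have Hspec : forall h, h \in H -> exists m, [/\ jump m, m \in l & h = fsel m].
  by move=> h /mapP [m ml ->]; exists m; split => //; apply/hl.
have HJ : forall h, h \in H -> J h.
  move=> h /Hspec [m [[pos _] _ ->]]; by case: (fsel_spec pos).
have strong : forall f, J f -> f != 0 -> exists h, h \in H /\ lm_dvd s h f.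
  move=> f Jf nz.
  have C : Cn s J (LT s f) (absz (LC s f)) by exists f; split.
  have pos := dm_pos C; have dv := dm_dvd iJ C.
  have [m0 [le0 e0 j0]] := below_jump pos.
  have [_ _ lt0 lc0] := fsel_spec (proj1 j0).
  exists (fsel m0); split; first by apply: map_f; apply/hl.
  by rewrite /lm_dvd dvdzE lc0 e0 dv lt0 le0.
exists H; split; first split.
- by move=> h /Hspec [m [[pos _] _ ->]]; case: (fsel_spec pos).
- move=> f; split; last by apply: ideal_sub.
  move: {2}(LT s f) (erefl (LT s f)) => mu e Jf; move: mu f e Jf.
  apply: (well_founded_ind (tlt_wf s) (fun mu => forall f, LT s f = mu -> J f -> in_ideal H f)).
  move=> mu IH f e Jf; case: (eqVneq f 0) => [->|nz]; first exact: in_ideal0.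
  have [h [hH /andP [dv le]]] := strong f Jf nz.
  pose q := (LC s f %/ LC s h)%Z.
  pose t := (LT s f - LT s h)%MM.
  have hnz : h != 0 by case: (Hspec h hH) => m [[pos _] _ ->]; case: (fsel_spec pos).
  have ltg : LT s (h * 'X_[t]) = LT s f by rewrite LTMX // /t submK.
  have lcg : LC s (h * 'X_[t]) = LC s h by rewrite LCMX.
  have gin : in_ideal H (q *: (h * 'X_[t])).
    rewrite [h * _]mulrC scalerAl; apply: in_idealM; exact: in_ideal_gen.
  have [b c] := comb_bnd 1 (- q) (esym ltg).
  have -> : f = (1 *: f + (- q) *: (h * 'X_[t])) + q *: (h * 'X_[t]).
    by rewrite scale1r scaleNr addrNK.
  apply: in_idealD => //.
  set f' := (1 *: f + (- q) *: (h * 'X_[t])).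
  case: (eqVneq f' 0) => [->|nz']; first exact: in_ideal0.
  have c0 : f'@_(LT s f) = 0.
    by rewrite /f' c lcg mul1r mulNr divzK // subrr.
  apply: (IH (LT s f')); first by rewrite -e; apply: LT_lt.
    by [].
  rewrite /f' scale1r scaleNr; apply: ideal_B => //; apply: ideal_Z => //.
  by apply: ideal_MX => //; apply: HJ.
- exact: strong.
move=> i j iH jH ne; rewrite size_map in iH jH.
rewrite !(nth_map (@mnm0 n)) //.
have ji : jump (nth (@mnm0 n) l j) by apply/hl; apply: mem_nth.
have ii : jump (nth (@mnm0 n) l i) by apply/hl; apply: mem_nth.
have [_ _ lti lci] := fsel_spec (proj1 ii).
have [_ _ ltj lcj] := fsel_spec (proj1 ji).
apply/negP => /andP []; rewrite dvdzE lti ltj lci lcj => dv le.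
have nel : (nth (@mnm0 n) l i) != (nth (@mnm0 n) l j) by rewrite nth_uniq.
have [_ dv2] := dm_mono iJ le (proj1 ii).
have := proj2 ji _ le nel; by rewrite eqn_dvd dv dv2.
Qed.

End Exist2.


Section Reduce.
Variables (n : nat) (s : term_order n) (J : {mpoly int[n]} -> Prop).
Hypothesis iJ : is_ideal J.
Variables (B : pred 'X_{1..n}) (p : nat).
Hypothesis hred : forall m, B m -> exists h, [/\ J h, h != 0, (LT s h <= m)%MM &
   coprime (absz (LC s h)) p].
Local Notation tl := (tle s).

Definition bad m0 (F : {mpoly int[n]}) := [seq mu <- msupp F | (mu != m0) && B mu].

Lemma reduce_aux m0 mu : forall F, J F -> F != 0 -> LT s F = m0 ->
  coprime (absz (LC s F)) p -> (forall x, x \in bad m0 F -> tlt s x mu) ->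
  exists F', [/\ J F', F' != 0, LT s F' = m0, coprime (absz (LC s F')) p &
    forall x, F'@_x != 0 -> x != m0 -> ~~ B x].
Proof.
elim/(well_founded_ind (tlt_wf s)): mu => mu IH F JF nzF LTF cop bmu.
case: (eqVneq (bad m0 F) [::]) => [eb|neb].
  exists F; split => // x Fx nx; apply/negP => Bx.
  have : x \in bad m0 F by rewrite mem_filter nx Bx mcoeff_msupp.
  by rewrite eb.
set b := mx s (bad m0 F).
have bin : b \in bad m0 F by apply: mx_mem.
move: (bin); rewrite mem_filter => /andP [/andP [bm0 Bb]]; rewrite mcoeff_msupp => Fb.
have [h [Jh nzh le cph]] := hred Bb.
pose t := (b - LT s h)%MM.
pose g := h * 'X_[t].
have LTg : LT s g = b by rewrite /g LTMX // /t submK.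
have LCg : LC s g = LC s h by rewrite LCMX.
have bndg : bnd s g b by rewrite -LTg; apply: LT_ub.
have tlbm0 : tlt s b m0 by rewrite /tlt bm0 andbT -LTF; apply: LT_ub.
pose a := F@_b.
pose F' := LC s h *: F + (- a) *: g.
have JF' : J F'.
  by case: iJ => _ JD _; apply: JD; apply: ideal_Z => //; apply: ideal_MX.
have coefhi : forall m, tlt s b m -> F'@_m = LC s h * F@_m.
  move=> m bm; rewrite /F' mcoeffD !mcoeffZ.
  case: (eqVneq g@_m 0) => [->|gm]; first by rewrite mulr0 addr0.
  by move: (tlt_nle bm); rewrite bndg.
have F'm0 : F'@_m0 = LC s h * LC s F by rewrite coefhi // /LC LTF.
have nzlc : LC s h * LC s F != 0 by rewrite mulf_neq0 // LC_neq0.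
have bndF' : bnd s F' m0.
  rewrite /F'; apply: bndD; apply: bndZ; first by rewrite -LTF; apply: LT_ub.
  by apply: bnd_le bndg _; case/andP: tlbm0.
have LTF' : LT s F' = m0 by apply: LT_eq; rewrite // F'm0.
have nzF' : F' != 0 by apply: contra_neq nzlc => e; rewrite -F'm0 e mcoeff0.
have LCF' : LC s F' = LC s h * LC s F by rewrite /LC LTF' F'm0.
have copF' : coprime (absz (LC s F')) p by rewrite LCF' abszM coprimeMl cph cop.
have F'b : F'@_b = 0.
  by rewrite /F' mcoeffD !mcoeffZ -LTg -/(LC s g) LTg LCg mulNr /a mulrC subrr.
have badlt : forall x, x \in bad m0 F' -> tlt s x b.
  move=> x; rewrite mem_filter mcoeff_msupp => /andP [/andP [xm0 Bx] F'x].
  case/orP: (tle_tlt_total s b x) => // bx.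
  case: (eqVneq x b) => [exb|nexb]; first by rewrite exb F'b eqxx in F'x.
  have bx' : tlt s b x by rewrite /tlt bx eq_sym nexb.
  move: F'x; rewrite coefhi // mulf_eq0 negb_or => /andP [_ Fx].
  have : x \in bad m0 F by rewrite mem_filter xm0 Bx mcoeff_msupp.
  by move/(mx_ub s) => xb; move: (tlt_nle bx'); rewrite xb.
apply: (IH b _ F') => //; exact: bmu.
Qed.

Lemma reduce m0 F : J F -> F != 0 -> LT s F = m0 -> coprime (absz (LC s F)) p ->
  exists F', [/\ J F', F' != 0, LT s F' = m0, coprime (absz (LC s F')) p &
    forall x, F'@_x != 0 -> x != m0 -> ~~ B x].
Proof.
move=> JF nzF LTF cop; apply: (@reduce_aux m0 m0 F) => // x.
rewrite mem_filter mcoeff_msupp => /andP [/andP [xm0 _] Fx].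
by rewrite /tlt xm0 andbT -LTF; apply: LT_ub.
Qed.

End Reduce.


Section BigLcm.
Variables (T : eqType) (F : T -> nat).

Lemma dvdn_biglcm (r : seq T) x : x \in r -> (F x %| \big[lcmn/1%N]_(y <- r) F y)%N.
Proof.
elim: r => [//|a r IH]; rewrite inE big_cons => /orP [/eqP ->|xr].
  exact: dvdn_lcml.
exact: dvdn_trans (IH xr) (dvdn_lcmr _ _).
Qed.

Lemma biglcm_dvd (r : seq T) d : (forall x, x \in r -> F x %| d)%N ->
  (\big[lcmn/1%N]_(y <- r) F y %| d)%N.
Proof.
elim: r => [|a r IH] h; first by rewrite big_nil dvd1n.
rewrite big_cons dvdn_lcm h ?inE ?eqxx // IH // => x xr; apply: h; by rewrite inE xr orbT.
Qed.

Lemma biglcm_gt0 (r : seq T) : (forall x, x \in r -> 0 < F x)%N ->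
  (0 < \big[lcmn/1%N]_(y <- r) F y)%N.
Proof.
elim: r => [|a r IH] h; first by rewrite big_nil.
rewrite big_cons lcmn_gt0 h ?inE ?eqxx // IH // => x xr; apply: h; by rewrite inE xr orbT.
Qed.

Lemma prime_biglcm (r : seq T) p : prime p -> (p %| \big[lcmn/1%N]_(y <- r) F y)%N ->
  exists2 x, x \in r & (p %| F x)%N.
Proof.
move=> pp; elim: r => [|a r IH]; first by rewrite big_nil dvdn1 => /eqP e; rewrite e in pp.
rewrite big_cons => h.
have : (p %| F a * \big[lcmn/1%N]_(y <- r) F y)%N.
  by apply: dvdn_trans h _; rewrite dvdn_lcm dvdn_mulr // dvdn_mull.
rewrite Euclid_dvdM // => /orP [pa|/IH [x xr px]].
  by exists a; rewrite ?inE ?eqxx.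
by exists x; rewrite // inE xr orbT.
Qed.

Lemma dvdn_biggcd (r : seq T) x : x \in r -> (\big[gcdn/0%N]_(y <- r) F y %| F x)%N.
Proof.
elim: r => [//|a r IH]; rewrite inE big_cons => /orP [/eqP ->|xr].
  exact: dvdn_gcdl.
exact: dvdn_trans (dvdn_gcdr _ _) (IH xr).
Qed.

End BigLcm.

Lemma denq_div_int (z k : int) : k != 0 ->
  (absz (denq (z%:~R / k%:~R : rat)) %| absz k)%N.
Proof.
move=> nzk; set x := (z%:~R / k%:~R : rat).
have e' : ((numq x)%:~R * k%:~R : rat) = z%:~R * (denq x)%:~R.
  rewrite numqE /x -mulrA [_ * k%:~R]mulrC mulrA.
  by rewrite mulfVK // intr_eq0.
have e : numq x * k = z * denq x by apply: (@intr_inj rat); rewrite !intrM; exact: e'.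
have : (absz (denq x) %| absz (numq x) * absz k)%N.
  by rewrite -abszM e abszM dvdn_mull.
by rewrite Gauss_dvdr // coprime_sym coprime_num_den.
Qed.

Lemma int_mul_den (r : rat) (d : nat) : (absz (denq r) %| d)%N ->
  r * d%:~R = (numq (r * d%:~R))%:~R.
Proof.
case/dvdnP => q e.
have dz : (d%:Z) = q%:Z * denq r by rewrite e PoszM absz_denq.
have -> : r * d%:~R = (numq r * q%:Z)%:~R.
  by rewrite dz !intrM numqE -mulrA [(q%:Z)%:~R * _]mulrC.
by rewrite numq_int.
Qed.


Lemma LTZ n (R : idomainType) (s : term_order n) (f : {mpoly R[n]}) a :
  a != 0 -> LT s (a *: f) = LT s f.
Proof.
move=> nza; case: (eqVneq f 0) => [->|nz]; first by rewrite scaler0.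
apply: LT_eq; last by apply: bndZ; apply: LT_ub.
by rewrite mcoeffZ mulf_neq0 // LC_neq0.
Qed.

Lemma LCZ n (R : idomainType) (s : term_order n) (f : {mpoly R[n]}) a :
  a != 0 -> LC s (a *: f) = a * LC s f.
Proof. by move=> nza; rewrite /LC LTZ // mcoeffZ. Qed.

Definition ratmap n (F : {mpoly int[n]}) : {mpoly rat[n]} := map_mpoly (intr : int -> rat) F.

Section Prim.
Variables (n : nat) (s : term_order n).
Implicit Types (F : {mpoly int[n]}) (g : {mpoly rat[n]}).

Lemma ratmap_coef F m : (ratmap F)@_m = (F@_m)%:~R.
Proof. by rewrite /ratmap mcoeff_map_mpoly. Qed.

Lemma ratmap0 : ratmap (0 : {mpoly int[n]}) = 0.
Proof. by rewrite /ratmap raddf0. Qed.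

Lemma LT_ratmap F : LT s (ratmap F) = LT s F.
Proof.
case: (eqVneq F 0) => [->|nz]; first by rewrite ratmap0 !LT0.
apply: LT_eq; first by rewrite ratmap_coef intr_eq0 LC_neq0.
by move=> m; rewrite ratmap_coef intr_eq0; apply: LT_ub.
Qed.

Lemma LC_ratmap F : LC s (ratmap F) = (LC s F)%:~R.
Proof. by rewrite /LC LT_ratmap ratmap_coef. Qed.

Lemma den_gt0 g : (0 < den g)%N.
Proof. by apply: biglcm_gt0 => m _; rewrite absz_gt0 denq_neq0. Qed.

Lemma denq_dvd_den g m : (absz (denq g@_m) %| den g)%N.
Proof.
case: (boolP (m \in msupp g)) => mi; first by apply: (dvdn_biglcm (fun m => absz (denq g@_m))).
by rewrite (memN_msupp_eq0 mi) dvd1n.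
Qed.

Lemma content_dvd g m : (icontent g %| absz (numq (g@_m * (den g)%:~R)))%N.
Proof.
case: (boolP (m \in msupp g)) => mi.
  by apply: (dvdn_biggcd (fun m => absz (numq (g@_m * (den g)%:~R)))).
by rewrite (memN_msupp_eq0 mi) mul0r dvdn0.
Qed.

Lemma content_gt0 g : g != 0 -> (0 < icontent g)%N.
Proof.
move=> nz; apply: (dvdn_gt0 _ (content_dvd g (LT s g))).
rewrite absz_gt0 numq_eq0 mulf_neq0 ?LC_neq0 //.
by rewrite intr_eq0 -lt0n den_gt0.
Qed.

Lemma prim_coef g m : (prim g)@_m = numq (g@_m * (den g)%:~R / (icontent g)%:~R).
Proof.
rewrite /prim raddf_sum /=.
under eq_bigr => m' _ do rewrite mcoeffZ mcoeffX.
case: (boolP (m \in msupp g)) => mi.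
  rewrite (bigD1_seq m) ?msupp_uniq //= eqxx mulr1 big1 ?addr0 // => m' ne.
  by rewrite (negbTE ne) mulr0.
rewrite big1_seq ?(memN_msupp_eq0 mi) ?mul0r // => m' m'i.
have ne : (m' == m) = false by apply/negbTE; apply: contraNneq mi => <-.
by rewrite ne mulr0.
Qed.

Lemma prim_coef_rat g m : g != 0 ->
  ((prim g)@_m)%:~R = g@_m * (den g)%:~R / (icontent g)%:~R.
Proof.
move=> nz; set y := g@_m * (den g)%:~R.
have ey : y = (numq y)%:~R by apply: int_mul_den; apply: denq_dvd_den.
have : ((icontent g)%:Z %| numq y)%Z by rewrite dvdzE /=; apply: content_dvd.
case/dvdzP => q eq.
have cnz : ((icontent g)%:Z)%:~R != 0 :> rat by rewrite intr_eq0 -lt0n content_gt0.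
have -> : y / (icontent g)%:~R = q%:~R by rewrite ey eq intrM mulfK.
by rewrite prim_coef -/y ey eq intrM mulfK // numq_int.
Qed.

Lemma ratmap_prim g : g != 0 ->
  ratmap (prim g) = ((den g)%:~R / (icontent g)%:~R) *: g.
Proof.
move=> nz; apply/mpolyP => m; rewrite ratmap_coef prim_coef_rat // mcoeffZ.
by rewrite [RHS]mulrC mulrA.
Qed.

Lemma prim_scal_neq0 g : g != 0 -> ((den g)%:~R / (icontent g)%:~R : rat) != 0.
Proof.
move=> nz; rewrite mulf_neq0 // ?invr_eq0 intr_eq0 -lt0n ?den_gt0 //.
exact: content_gt0.
Qed.

Lemma prim_neq0 g : g != 0 -> prim g != 0.
Proof.
move=> nz; apply/eqP => e; have := ratmap_prim nz; rewrite e ratmap0 => /esym /eqP.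
by rewrite scaler_eq0 (negbTE nz) orbF (negbTE (prim_scal_neq0 nz)).
Qed.

Lemma LT_prim g : g != 0 -> LT s (prim g) = LT s g.
Proof.
move=> nz; rewrite -LT_ratmap ratmap_prim // LTZ //; exact: prim_scal_neq0.
Qed.

Lemma LC_prim g : g != 0 -> LC s g = 1 ->
  LC s (prim g) * (icontent g)%:Z = (den g)%:Z.
Proof.
move=> nz lc1; apply: (@intr_inj rat); rewrite intrM.
have -> : ((LC s (prim g))%:~R : rat) = (den g)%:~R / (icontent g)%:~R.
  by rewrite -LC_ratmap ratmap_prim // LCZ ?lc1 ?mulr1 //; exact: prim_scal_neq0.
by rewrite mulfVK // intr_eq0 -lt0n content_gt0.
Qed.

Lemma LC_prim_dvd g : g != 0 -> LC s g = 1 -> (absz (LC s (prim g)) %| den g)%N.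
Proof.
move=> nz lc1; have e := LC_prim nz lc1.
have : absz (LC s (prim g) * (icontent g)%:Z) = den g by rewrite e.
by rewrite abszM /= => <-; apply: dvdn_mulr.
Qed.

Lemma JI (I : {mpoly rat[n]} -> Prop) (G : seq {mpoly rat[n]}) :
  is_ideal I -> (forall g, g \in G -> g != 0) -> (forall g, g \in G -> I g) ->
  forall F, in_ideal (map (@prim n) G) F -> I (ratmap F).
Proof.
move=> iI nzG IG F [c ->]; rewrite /ratmap raddf_sum /=.
case: (iI) => I0 ID IM; apply: (big_ind (fun x => I x)) => // i _.
rewrite rmorphM /=; apply: IM.
have ii : (i < size G)%N by rewrite -(size_map (@prim n)).
rewrite (nth_map 0) //.
have gi : G`_i \in G by apply: mem_nth.
rewrite -/(ratmap _) ratmap_prim ?nzG //; apply: ideal_Z => //; exact: IG.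
Qed.

End Prim.


Unset Implicit Arguments.

Theorem theorem3p11 (n : nat) (sigma : term_order n)
    (I : {mpoly rat[n]} -> Prop) (G : seq {mpoly rat[n]}) :
  is_ideal I ->
  (exists f, I f /\ f != 0) ->
  reduced_groebner sigma I G ->
  radn (denF G) = radn (lcm_sigma sigma (in_ideal (map (@prim n) G))).
Proof.
move=> iI _ [[uG nzG] IG c3 monic red].
set J := in_ideal (map (@prim n) G).
have iJ : is_ideal J := is_ideal_in_ideal _.
have IGg : forall g, g \in G -> I g by move=> g gG; apply/IG; apply: in_ideal_gen.
have JIm : forall F, J F -> I (ratmap F) := JI sigma iI nzG IGg.
have Jprim : forall g, g \in G -> J (prim g).
  by move=> g gG; apply: in_ideal_gen; apply: map_f.
rewrite /lcm_sigma.
set H := epsilon (inhabits [::]) (minimal_strong_groebner sigma J).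
have msg : minimal_strong_groebner sigma J H.
  by apply: (epsilon_spec (inhabits [::]) (minimal_strong_groebner sigma J)); apply: exists_msgb.
case: msg => [[nzH JH strong] minH].
have HJ : forall h, h \in H -> J h by move=> h hH; apply/JH; apply: in_ideal_gen.
set D := denF G.
set L := \big[lcmn/1%N]_(h <- H) absz (LC sigma h).
have Dpos : (0 < D)%N by apply: biglcm_gt0 => g _; apply: den_gt0.
have Lpos : (0 < L)%N.
  by apply: biglcm_gt0 => h hH; rewrite absz_gt0 LC_neq0 // nzH.
suff key : forall p, prime p -> (p %| D)%N = (p %| L)%N.
  rewrite /radn; have -> : primes D = primes L; last by [].
  apply/eq_primes => p; rewrite !mem_primes Dpos Lpos /=.
  by case: (boolP (prime p)) => //= pp; apply: key.
move=> p pp; apply/idP/idP.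
- move=> pD; apply/negPn/negP => pL.
  have [g0 g0G pg0] := @prime_biglcm _ (@den n) G p pp pD.
  have copH : forall h, h \in H -> coprime (absz (LC sigma h)) p.
    move=> h hH; rewrite coprime_sym prime_coprime //; apply: contra pL => ph.
    exact: dvdn_trans ph (dvdn_biglcm (fun h => absz (LC sigma h)) hH).
  pose B := fun m => has (fun g => (LT sigma g <= m)%MM) G.
  have hred : forall m, B m -> exists h, [/\ J h, h != 0, (LT sigma h <= m)%MM &
      coprime (absz (LC sigma h)) p].
    move=> m /hasP [g gG le].
    pose P := prim g * 'X_[m - LT sigma g].
    have JP : J P by apply: ideal_MX => //; apply: Jprim.
    have nzP : P != 0 by apply: (MX_neq0 sigma); apply: (prim_neq0 sigma); apply: nzG.
    have LTP : LT sigma P = m by rewrite LTMX ?(prim_neq0 sigma) ?nzG // LT_prim ?nzG // submK.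
    have [h [hH /andP [_ leh]]] := strong P JP nzP.
    exists h; split; [exact: HJ | exact: nzH | by rewrite -LTP | exact: copH].
  set m0 := LT sigma g0.
  have Bm0 : B m0 by apply/hasP; exists g0 => //; apply: lepm_refl.
  have [h0 [Jh0 nzh0 le0 cop0]] := hred m0 Bm0.
  pose F0 := h0 * 'X_[m0 - LT sigma h0].
  have JF0 : J F0 by apply: ideal_MX.
  have nzF0 : F0 != 0 by apply: (MX_neq0 sigma).
  have LTF0 : LT sigma F0 = m0 by rewrite LTMX // submK.
  have cF0 : coprime (absz (LC sigma F0)) p by rewrite LCMX.
  have [F [JF nzF LTF copF redF]] := @reduce n sigma J iJ B p hred m0 F0 JF0 nzF0 LTF0 cF0.
  set k := LC sigma F.
  have knz : k != 0 by apply: LC_neq0.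
  have kq : (k%:~R : rat) != 0 by rewrite intr_eq0.
  pose f := (k%:~R : rat)^-1 *: ratmap F.
  have If : I f by apply: ideal_Z => //; apply: JIm.
  have fm0 : f@_m0 = 1 by rewrite mcoeffZ ratmap_coef -LTF -/(LC sigma F) mulVf.
  have g0m0 : g0@_m0 = 1 by apply: monic.
  have fg : f = g0.
    apply/eqP; apply: contraT => ne.
    have dnz : f - g0 != 0 by rewrite subr_eq0.
    have Id : I (f - g0) by apply: ideal_B => //; apply: IGg.
    have [g [gG le]] := c3 _ Id dnz.
    set mu := LT sigma (f - g0) in le.
    have dmu : (f - g0)@_mu != 0 by apply: LC_neq0.
    have mune : mu != m0 by apply: contra_neq dmu => ->; rewrite mcoeffB fm0 g0m0 subrr.
    have Bmu : B mu by apply/hasP; exists g.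
    case: (eqVneq f@_mu 0) => [fz|fnz].
      have g0mu : g0@_mu != 0 by move: dmu; rewrite mcoeffB fz sub0r oppr_eq0.
      case: (eqVneq g g0) => [eg|neg].
        rewrite eg in le; have t1 := tle_lem sigma le.
        have t2 : tle sigma mu m0 by apply: LT_ub.
        by move: mune; rewrite (tle_anti t2 t1) eqxx.
      by move: (red g g0 gG g0G neg mu); rewrite mcoeff_msupp g0mu le => /(_ isT).
    have Fmu : F@_mu != 0.
      by apply: contra_neq fnz => e; rewrite mcoeffZ ratmap_coef e mulr0.
    by move: (redF mu Fmu mune); rewrite Bmu.
  have dk : (den g0 %| absz k)%N.
    apply: biglcm_dvd => m _; rewrite -fg mcoeffZ ratmap_coef mulrC.
    exact: denq_div_int.
  move: copF; rewrite -/k coprime_sym prime_coprime // => /negP; apply.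
  exact: dvdn_trans pg0 dk.
- move=> pL; apply/negPn/negP => pD.
  have [h hH ph] := @prime_biglcm _ (fun h => absz (LC sigma h)) H p pp pL.
  have Jh := HJ h hH; have nzh := nzH h hH.
  have rnz : ratmap h != 0 by rewrite -(LC_eq0 sigma) LC_ratmap intr_eq0 LC_neq0.
  have [g [gG le]] := c3 _ (JIm h Jh) rnz.
  rewrite LT_ratmap in le.
  have gnz := nzG g gG.
  pose P := prim g * 'X_[LT sigma h - LT sigma g].
  have JP : J P by apply: ideal_MX => //; apply: Jprim.
  have nzP : P != 0 by apply: (MX_neq0 sigma); apply: (prim_neq0 sigma).
  have LTP : LT sigma P = LT sigma h by rewrite LTMX ?(prim_neq0 sigma) // LT_prim // submK.
  have LCP : LC sigma P = LC sigma (prim g) by rewrite LCMX.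
  have pP : ~~ (p %| absz (LC sigma P))%N.
    apply: contra pD => pdv; rewrite LCP in pdv.
    apply: dvdn_trans pdv (dvdn_trans (LC_prim_dvd (s:=sigma) gnz (monic g gG)) _).
    exact: (dvdn_biglcm (@den n) gG).
  have [f [Jf nzf LTf LCf]] := gcd_comb iJ Jh JP nzh (esym LTP).
  have [h' [h'H /andP [dv1 le1]]] := strong f Jf nzf.
  have dvh : (LC sigma h' %| LC sigma h)%Z.
    by apply: dvdz_trans dv1 _; rewrite LCf dvdz_gcdl.
  have dvP : (LC sigma h' %| LC sigma P)%Z.
    by apply: dvdz_trans dv1 _; rewrite LCf dvdz_gcdr.
  have neh : h' != h.
    apply/eqP => e; rewrite e dvdzE in dvP; move/negP: pP; apply.
    exact: dvdn_trans ph dvP.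
  have le2 : (LT sigma h' <= LT sigma h)%MM by rewrite -LTf.
  have i_lt : (index h' H < size H)%N by rewrite index_mem.
  have j_lt : (index h H < size H)%N by rewrite index_mem.
  have ij : index h' H != index h H.
    apply: contra_neq neh => e.
    by rewrite -(nth_index 0 h'H) -(nth_index 0 hH) e.
  move: (minH _ _ i_lt j_lt ij); rewrite !nth_index //.
  by rewrite /lm_dvd dvh le2.
Qed.
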